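(* Let $n\ge 2$ and let $\mathcal M_{2n}$ be the Möbius ladder on $2n$ vertices. Then for every vertex $v$ of $\mathcal M_{2n}$, $\gamma_M(\mathcal M_{2n}-v)=\gamma_M(\mathcal M_{2n})-1$; that is, every vertex of $\mathcal M_{2n}$ is a 1-critical-vertex.
   Context: The Möbius ladder $\mathcal M_{2n}$ has vertices $v_1,\dots,v_{2n}$, the cycle edges $v_iv_{i+1}$ ($i=1,\dots,2n$, indices mod $2n$) and the rungs $v_iv_{n+i}$ ($i=1,\dots,n$). $\gamma_M(H)$ is the maximum genus of a connected graph $H$ (largest $k$ such that $H$ embeds cellularly in the orientable surface of genus $k$). A vertex $v$ is a 1-critical-vertex of $G$ if $G-v$ is connected and $\gamma_M(G-v)=\gamma_M(G)-1$. *)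

(* Defs.v *)
From mathcomp Require Import all_boot all_order all_fingroup.
Set Implicit Arguments. Unset Strict Implicit. Unset Printing Implicit Defensive.

(* A simple graph is a finite type T with a symmetric irreflexive relation e.
   Darts (directed edges) are the pairs p : T * T with e p.1 p.2. *)
Section Genus.
Variables (T : finType) (e : rel T).

Definition is_dart (p : T * T) : bool := e p.1 p.2.

(* A rotation system (combinatorial description of a cellular embedding in an
   orientable surface, Heffter-Edmonds-Ringel): a permutation r of T * T that
   fixes non-darts, maps each dart to a dart with the same tail, and cyclically
   permutes (single orbit) the darts leaving each vertex. *)
Definition rotation_system (r : {perm (T * T)}) : bool :=
  [&& [forall p, ~~ is_dart p ==> (r p == p)],
      [forall p, is_dart p ==> is_dart (r p) && ((r p).1 == p.1)]
    & [forall p, forall q,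
         [&& is_dart p, is_dart q & p.1 == q.1] ==> fconnect r p q]].

Definition face_step (r : {perm (T * T)}) (p : T * T) : T * T := r (p.2, p.1).

Definition nfaces (r : {perm (T * T)}) : nat := fcard (face_step r) is_dart.

Definition nedges : nat := #|[pred p | is_dart p]| %/ 2.

(* Euler: |V| - |E| + |F| = 2 - 2g *)
Definition emb_genus (r : {perm (T * T)}) : nat :=
  (2 + nedges - (#|T| + nfaces r))./2.

Definition max_genus : nat :=
  \max_(r : {perm (T * T)} | rotation_system r) emb_genus r.

Definition connected_graph : Prop := forall x y : T, connect e x y.

End Genus.

Definition del_vertex (T : finType) (v : T) := {x : T | x != v}.
Definition del_rel (T : finType) (e : rel T) (v : T) : rel (del_vertex v) :=
  fun x y => e (val x) (val y).

(* Moebius ladder M_{2n}: vertex v_{i+1} is i : 'I_(2n); cycle edges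
   i ~ i+1 (mod 2n) and rungs i ~ i+n (mod 2n). *)
Definition mobius_adj (n : nat) : rel 'I_(n.*2) :=
  fun i j => [|| (i.+1 %% n.*2 == j), (j.+1 %% n.*2 == i) | ((i + n) %% n.*2 == j)].
Arguments mobius_adj : clear implicits.
Arguments del_rel {T} e v.
Arguments del_vertex {T} v.

(* Main.v *)
Require Import Defs.
From mathcomp Require Import all_boot all_order all_fingroup zify.
Set Implicit Arguments. Unset Strict Implicit. Unset Printing Implicit Defensive.

Section Gen.
Variables (T : finType) (e : rel T).
Hypothesis esy : symmetric e.

Lemma face_step_inj (r : {perm (T*T)}) : injective (face_step r).
Proof.
move=> [a b] [c d]; rewrite /face_step /= => /perm_inj [-> ->] //.
Qed.

Lemma nfaces_le (r : {perm (T*T)}) (S : seq (T*T)) :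
  (forall p, is_dart e p -> exists2 s, s \in S & fconnect (face_step r) s p) ->
  nfaces e r <= size S.
Proof.
move=> hS; rewrite /nfaces.
have sym := fconnect_sym (@face_step_inj r).
apply: leq_trans (_ : #|[pred x in map (froot (face_step r)) S]| <= _);
  last by rewrite (leq_trans (card_size _)) // size_map.
apply: subset_leq_card; apply/subsetP => p; rewrite !inE => /andP [rp dp].
have [s sS cs] := hS p dp.
apply/mapP; exists s => //.
by rewrite -(eqP rp); apply/esym/(rootP sym).
Qed.

Lemma nfaces_gt0 (r : {perm (T*T)}) p : rotation_system e r -> is_dart e p ->
  0 < nfaces e r.
Proof.
case/and3P => /forallP h1 /forallP h2 _ dp.
apply/fcard_gt0P; [exact: (@face_step_inj r) | | by exists p].
move=> x y /eqP <- {y}; rewrite /face_step !unfold_in.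
case: (boolP (is_dart e x)) => dx.
  have dx' : is_dart e (x.2, x.1) by rewrite /is_dart /= esy.
  have /implyP/(_ dx')/andP[hh _] := h2 (x.2, x.1).
  by move: dx hh; rewrite /is_dart => -> ->.
have dx' : ~~ is_dart e (x.2, x.1) by rewrite /is_dart /= esy.
have /implyP/(_ dx')/eqP -> := h1 (x.2, x.1).
by move: dx dx'; rewrite /is_dart /= => /negbTE -> /negbTE ->.
Qed.

Variable nb : T -> seq T.
Hypothesis nbE : forall x y, e x y = (y \in nb x).
Hypothesis nbU : forall x, uniq (nb x).

Definition rotf (p : T * T) := if e p.1 p.2 then (p.1, next (nb p.1) p.2) else p.

Lemma rotf_inj : injective rotf.
Proof.
move=> [x y] [x' y']; rewrite /rotf /=.
case: (boolP (e x y)) => hxy; case: (boolP (e x' y')) => hxy' //=.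
- case=> <- h; congr pair; move: (congr1 (prev (nb x)) h); rewrite !prev_next //.
- case=> ex ey; move: hxy'; rewrite -ey -ex nbE mem_next -nbE hxy //.
- case=> ex ey; move: hxy; rewrite ey ex nbE mem_next -nbE hxy' //.
Qed.

Definition rotp : {perm (T*T)} := perm rotf_inj.

Lemma iter_rot k x y : e x y ->
  iter k rotp (x, y) = (x, iter k (next (nb x)) y) /\ e x (iter k (next (nb x)) y).
Proof.
move=> exy; elim: k => [|k [IH1 IH2]] //=.
rewrite IH1 permE /rotf /= IH2; split => //.
by rewrite nbE mem_next -nbE.
Qed.

Lemma rot_sys : rotation_system e rotp.
Proof.
apply/and3P; split.
- apply/forallP => p; apply/implyP => hp.
  by rewrite permE /rotf; move: hp; rewrite /is_dart => /negbTE ->.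
- apply/forallP => [[x y]]; apply/implyP; rewrite /is_dart /= => hp.
  by rewrite permE /rotf /= hp /= nbE mem_next -nbE hp eqxx.
- apply/forallP => [[x y]]; apply/forallP => [[x' z]]; apply/implyP.
  rewrite /is_dart /= => /and3P [hy hz /eqP ex]; subst x'.
  have: fconnect (next (nb x)) y z.
    by rewrite (fconnect_cycle (cycle_next (nbU x))) -?nbE.
  move/iter_findex => <-.
  have [<- _] := iter_rot (findex (next (nb x)) y z) hy.
  exact: fconnect_iter.
Qed.

Lemma face_rotE x y : e y x -> face_step rotp (x, y) = (y, next (nb y) x).
Proof. by move=> h; rewrite /face_step permE /rotf /= h. Qed.

Lemma dart_card : #|[pred p | is_dart e p]| = \sum_x size (nb x).
Proof.
transitivity (\sum_(p : T * T) (e p.1 p.2 : nat)).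
  rewrite -sum1_card big_mkcond /=; apply: eq_bigr => p _.
  by rewrite inE /is_dart; case: (e _ _).
rewrite -(pair_big xpredT xpredT (fun x y => (e x y : nat))) /=.
apply: eq_bigr => x _; rewrite -(card_uniqP (nbU x)) -sum1_card.
by rewrite [RHS]big_mkcond; apply: eq_bigr => y _; rewrite nbE; case: (_ \in _).
Qed.

End Gen.

Section Genus2.
Variables (T : finType) (e : rel T).
Hypothesis esy : symmetric e.

Lemma genus_le r p : rotation_system e r -> is_dart e p ->
  emb_genus e r <= (1 + nedges e - #|T|)./2.
Proof.
move=> rs dp; have := nfaces_gt0 esy rs dp; rewrite /emb_genus => h.
apply: half_leq; lia.
Qed.

Lemma genus_ge r k : nfaces e r <= k ->
  (2 + nedges e - (#|T| + k))./2 <= emb_genus e r.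
Proof. by move=> h; rewrite /emb_genus; apply: half_leq; lia. Qed.

Lemma max_genus_eq m r0 p : is_dart e p -> rotation_system e r0 ->
  (1 + nedges e - #|T|)./2 <= m -> m <= emb_genus e r0 -> max_genus e = m.
Proof.
move=> dp rs0 h1 h2; apply/eqP; rewrite eqn_leq; apply/andP; split.
  apply/bigmax_leqP => r rs; apply: leq_trans h1; exact: genus_le rs dp.
by apply: leq_trans h2 _; apply: (leq_bigmax_cond (F := emb_genus e)).
Qed.

End Genus2.

Lemma next3 (T : eqType) (p q s x : T) :
  next [:: p; q; s] x = if x == p then q else if x == q then s else if x == s then p else x.
Proof. by []. Qed.
Lemma next2 (T : eqType) (p q x : T) :
  next [:: p; q] x = if x == p then q else if x == q then p else x.
Proof. by []. Qed.

Section Mob.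
Variables (n : nat) (hn : 2 <= n) (v : 'I_(n.*2)).
Local Notation N := (n.*2).

Lemma N_gt0 : 0 < N. Proof. lia. Qed.

Lemma mod_window a b : a <= b -> b < a + N + N + N ->
  (a == b %[mod N]) = [|| b == a, b == a + N | b == a + N + N].
Proof.
move=> h1 h2; rewrite eq_sym eqn_mod_dvd //; apply/idP/idP.
  case/dvdnP => q hq; have : q < 3 by nia.
  by case: q hq => [|[|[|q]]] //= hq _; lia.
case/or3P => /eqP ->; rewrite ?subnn ?dvdn0 //.
  by rewrite addKn dvdnn.
by rewrite -addnA addKn dvdn_add.
Qed.

Lemma modw a b : a < b + N + N + N -> b < a + N + N + N ->
  (a == b %[mod N]) = [|| a == b, a == b + N, a + N == b, a == b + N + N | a + N + N == b].
Proof.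
move=> h1 h2; case: (leqP a b) => hab.
  rewrite mod_window //; lia.
rewrite eq_sym mod_window //; [lia | lia].
Qed.

Lemma modT a b : a = b \/ a = b + N \/ a + N = b \/ a = b + N + N \/ a + N + N = b ->
  (a == b %[mod N]) = true.
Proof.
case=> [->|[->|[<-|[->|<-]]]]; by rewrite ?modnDr eqxx.
Qed.

Lemma modF a b : a < b + N + N + N -> b < a + N + N + N ->
  ~~ [|| a == b, a == b + N, a + N == b, a == b + N + N | a + N + N == b] ->
  (a == b %[mod N]) = false.
Proof. by move=> h1 h2 h3; rewrite modw // (negbTE h3). Qed.

Ltac clmod := repeat match goal with H : context [_ %% _] |- _ => clear H end.
Ltac lia' := clmod; lia.
Ltac cong1 := match goal with |- context [?a %% N == ?b %% N] =>
   first [ rewrite (@modF a b); [|lia'|lia'|lia']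
         | rewrite (@modT a b); [|lia'] ] end.
Ltac cong := repeat cong1; try done.

Definition Y (i : nat) : 'I_N := Ordinal (ltn_pmod (v + i) N_gt0).

Lemma Yeq i j : (Y i == Y j) = (i == j %[mod N]).
Proof. by rewrite -val_eqE /= eqn_modDl. Qed.

Lemma Y0 : Y 0 = v.
Proof. by apply: val_inj; rewrite /= addn0 modn_small. Qed.

Lemma Yv i : (Y i == v) = (i == 0 %[mod N]).
Proof. by rewrite -Y0 Yeq. Qed.

Lemma Ycong i j : i = j %[mod N] -> Y i = Y j.
Proof. by move=> h; apply/eqP; rewrite Yeq h. Qed.

Definition rl (y : 'I_N) : nat := (y + (N - v)) %% N.

Lemma rel_lt y : rl y < N. Proof. exact: ltn_pmod N_gt0. Qed.

Lemma YK y : Y (rl y) = y.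
Proof.
apply: val_inj => /=; rewrite modnDmr.
have -> : v + (y + (N - v)) = y + N by have := ltn_ord v; lia.
by rewrite modnDr modn_small.
Qed.

Lemma relY b : rl (Y b) = b %[mod N].
Proof.
rewrite /rl /= modnDml modn_mod.
have -> : v + b + (N - v) = b + N by have := ltn_ord v; lia.
by rewrite modnDr.
Qed.

Lemma valY i : nat_of_ord (Y i) = (v + i) %% N. Proof. by []. Qed.

Lemma adj_aux x y c : ((v + x) %% N + c == v + y %[mod N]) = (x + c == y %[mod N]).
Proof. by rewrite modnDml -addnA eqn_modDl. Qed.

Lemma adjY a b : mobius_adj n (Y a) (Y b) =
  [|| b == a + 1 %[mod N], a == b + 1 %[mod N] | b == a + n %[mod N]].
Proof.
rewrite /mobius_adj !valY -(addn1 ((v+a)%%N)) -(addn1 ((v+b)%%N)) !adj_aux.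
by rewrite (eq_sym ((a + 1) %% N)) (eq_sym ((b + 1) %% N)) (eq_sym ((a + n) %% N)).
Qed.

Definition nbM (y : 'I_N) : seq 'I_N :=
  if y == v then [:: Y (rl y + 1); Y (rl y + n); Y (rl y + (N - 1))]
  else [:: Y (rl y + 1); Y (rl y + (N - 1)); Y (rl y + n)].

Lemma YrelD b c : Y (rl (Y b) + c) = Y (b + c).
Proof. by apply: Ycong; rewrite -modnDml relY modnDml. Qed.

Lemma nbM_Y b : nbM (Y b) = if b == 0 %[mod N] then
   [:: Y (b + 1); Y (b + n); Y (b + (N - 1))]
  else [:: Y (b + 1); Y (b + (N - 1)); Y (b + n)].
Proof. by rewrite /nbM Yv !YrelD. Qed.

Lemma swap1 a b : (a == b + 1 %[mod N]) = (b == a + (N - 1) %[mod N]).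
Proof.
rewrite -(eqn_modDr (N - 1)).
have -> : b + 1 + (N - 1) = b + N by lia.
by rewrite modnDr eq_sym.
Qed.

Lemma swapn a b : (b == a + n %[mod N]) = (a == b + n %[mod N]).
Proof.
rewrite -(eqn_modDr n).
have -> : a + n + n = a + N by lia.
by rewrite modnDr eq_sym.
Qed.

Lemma mem_nbM a b : (Y b \in nbM (Y a)) =
  [|| b == a + 1 %[mod N], b == a + (N - 1) %[mod N] | b == a + n %[mod N]].
Proof. by rewrite nbM_Y; case: ifP => _; rewrite !inE !Yeq //; congr (_ || _); apply: orbC. Qed.

Lemma nbM_E x y : mobius_adj n x y = (y \in nbM x).
Proof. by rewrite -(YK x) -(YK y) adjY mem_nbM (swap1 (rl x) (rl y)). Qed.

Lemma nbM_U x : uniq (nbM x).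
Proof.
rewrite -(YK x) nbM_Y; have := rel_lt x; move: (rl x) => a ha.
by case: ifP => _; rewrite /= !inE !Yeq; cong.
Qed.

Lemma adj_sym : symmetric (mobius_adj n).
Proof.
move=> x y; rewrite -(YK x) -(YK y) !adjY swapn.
by bool_congr.
Qed.

Lemma chain (T : finType) (g : rel T) (f : nat -> T) s a b :
  0 < s -> (forall j, a <= j -> j + s <= b -> connect g (f j) (f (j + s))) ->
  a <= b -> s %| b - a -> connect g (f a) (f b).
Proof.
move=> s0 h ab /dvdnP [k hk].
have -> : b = a + k * s by lia.
have : a + k * s <= b by lia.
elim: k {hk} => [|k IH] hk; first by rewrite addn0.
have hk' : a + k * s <= b by rewrite mulSn in hk; lia.
apply: connect_trans (IH hk') _.
have -> : a + k.+1 * s = a + k * s + s by rewrite mulSn; lia.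
by apply: h; [lia | rewrite mulSn in hk; lia].
Qed.

Definition rM := rotp nbM_E nbM_U.
Local Notation fsM := (face_step rM).
Local Notation cM := (fconnect fsM).

Definition F i := (Y i, Y (i + 1)).
Definition B i := (Y i, Y (i + (N - 1))).
Definition R i := (Y i, Y (i + n)).

Lemma cong1D i j c : i = j %[mod N] -> i + c = j + c %[mod N].
Proof. by move=> h; rewrite -modnDml h modnDml. Qed.

Lemma Fc i j : i = j %[mod N] -> F i = F j.
Proof. by move=> h; rewrite /F (Ycong h) (Ycong (cong1D 1 h)). Qed.
Lemma Bc i j : i = j %[mod N] -> B i = B j.
Proof. by move=> h; rewrite /B (Ycong h) (Ycong (cong1D _ h)). Qed.
Lemma Rc i j : i = j %[mod N] -> R i = R j.
Proof. by move=> h; rewrite /R (Ycong h) (Ycong (cong1D _ h)). Qed.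

Lemma fsF i : fsM (F i) = if i + 1 == 0 %[mod N] then F (i + 1) else R (i + 1).
Proof.
rewrite /F face_rotE; last by rewrite adjY; cong.
by rewrite nbM_Y; case: ifP => _; rewrite next3 !Yeq; cong.
Qed.

Lemma fsR i : fsM (R i) = if i + n == 0 %[mod N] then B (i + n) else F (i + n).
Proof.
rewrite /R face_rotE; last by rewrite adjY; cong.
by rewrite nbM_Y; case: ifP => _; rewrite next3 !Yeq; cong.
Qed.

Lemma fsB i : fsM (B i) = if i + (N - 1) == 0 %[mod N] then R (i + (N - 1))
   else B (i + (N - 1)).
Proof.
rewrite /B face_rotE; last by rewrite adjY; cong.
by rewrite nbM_Y; case: ifP => _; rewrite next3 !Yeq; cong.
Qed.

Lemma cM_sym x y : cM x y = cM y x.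
Proof. exact: (fconnect_sym (@face_step_inj _ rM)). Qed.

Lemma cM1 d d' : fsM d = d' -> cM d d'.
Proof. by move=> <-; exact: fconnect1. Qed.

Lemma cMt x y z : cM x y -> cM y z -> cM x z.
Proof. exact: connect_trans. Qed.

Lemma two_stepM i : i < N -> i != n - 2 -> i != n - 1 -> i != N - 2 -> i != N - 1 ->
  cM (F i) (F (i + 2)).
Proof.
move=> h1 h2 h3 h4 h5.
apply: (cMt (y := R (i + 1))); first by apply: cM1; rewrite fsF; cong.
apply: (cMt (y := F (i + 1 + n))); first by apply: cM1; rewrite fsR; cong.
apply: (cMt (y := R (i + 1 + n + 1))); first by apply: cM1; rewrite fsF; cong.
apply: cM1; rewrite fsR; cong; apply: Fc; apply/eqP; cong.
Qed.

Lemma one_stepM i : i < N -> i != n - 1 -> i != N - 1 -> cM (F i) (F (i + 1 + n)).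
Proof.
move=> h1 h3 h5.
apply: (cMt (y := R (i + 1))); first by apply: cM1; rewrite fsF; cong.
by apply: cM1; rewrite fsR; cong.
Qed.

Lemma chainM a b : a <= b -> 2 %| b - a ->
  (forall j, a <= j -> j + 2 <= b ->
     [&& j < N, j != n - 2, j != n - 1, j != N - 2 & j != N - 1]) ->
  cM (F a) (F b).
Proof.
move=> ab d h; apply: (chain (f := F) (s := 2)) => // j h1 h2.
by case/and5P: (h j h1 h2) => *; apply: two_stepM.
Qed.

Lemma eM0 : cM (F 0) (F (n + 1)).
Proof. by rewrite (_ : n + 1 = 0 + 1 + n); [apply: one_stepM | ]; lia. Qed.

Lemma eM1 : cM (F n) (F 1).
Proof.
apply: (cMt (y := F (n + 1 + n))); first by apply: one_stepM; lia.
by rewrite (Fc (j := 1)) //; apply/eqP; cong.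
Qed.

Lemma eM2 : cM (F (N - 1)) (F 0).
Proof. by apply: cM1; rewrite fsF; cong; apply: Fc; apply/eqP; cong. Qed.

Ltac chn := apply: chainM; [lia | rewrite dvdn2; lia | move=> ? ? ?; lia].

Lemma FM_odd i : odd n -> i < N -> cM (F 0) (F i).
Proof.
move=> on hi.
have e2' : cM (F 0) (F (N - 1)) by rewrite cM_sym; exact: eM2.
have e3 : cM (F 0) (F n) by apply: (cMt e2'); rewrite cM_sym; chn.
case: (boolP (odd i)) => oi; case: (leqP n i) => ni.
- by apply: (cMt e3); chn.
- by apply: (cMt e3); apply: (cMt eM1); chn.
- by apply: (cMt eM0); chn.
- by chn.
Qed.

Lemma FM_even i : ~~ odd n -> i < N -> cM (F 0) (F i) \/ cM (F 1) (F i).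
Proof.
move=> on hi.
case: (boolP (odd i)) => oi; case: (leqP n i) => ni.
- by left; apply: (cMt eM0); chn.
- by right; chn.
- by right; have e1 := eM1; rewrite cM_sym in e1; apply: (cMt e1); chn.
- by left; chn.
Qed.

Lemma BM k : 1 <= k <= N -> cM (B 1) (B k).
Proof.
case/andP=> k1 k2; apply: (chain (f := B) (s := 1)); [done | | lia | exact: dvd1n].
move=> j h1 h2; rewrite cM_sym; apply: cM1; rewrite fsB; cong.
by apply: Bc; apply/eqP; cong.
Qed.

Lemma FM_all i : cM (F 0) (F i) \/ (~~ odd n /\ cM (F 1) (F i)).
Proof.
rewrite (@Fc i (i %% N)); last by rewrite modn_mod.
have hi : i %% N < N by apply: ltn_pmod; lia.
case: (boolP (odd n)) => on; first by left; apply: FM_odd.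
by case: (FM_even on hi) => h; [left | right].
Qed.

Lemma B1Fn : cM (B 1) (F n).
Proof.
apply: (cMt (y := R 0)).
  by apply: cM1; rewrite fsB; cong; apply: Rc; apply/eqP; cong.
by apply: cM1; rewrite fsR; cong.
Qed.

Lemma dart_FBR (p : 'I_N * 'I_N) : mobius_adj n p.1 p.2 ->
  exists2 i, i < N & [\/ p = F i, p = B i | p = R i].
Proof.
case: p => x y /=.
have [a ha ->] : exists2 a, a < N & x = Y a by exists (rl x); [exact: rel_lt | rewrite YK].
have [b hb ->] : exists2 b, b < N & y = Y b by exists (rl y); [exact: rel_lt | rewrite YK].
rewrite nbM_E mem_nbM => h; exists a => //.
case/or3P: h => /eqP /Ycong ->; [apply: Or31 | apply: Or32 | apply: Or33]; done.
Qed.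

Lemma allM p : mobius_adj n p.1 p.2 -> cM (F 0) p \/ (~~ odd n /\ cM (F 1) p).
Proof.
move=> /dart_FBR [i hi].
have tr : forall d k, cM (F k) d -> cM (F 0) d \/ (~~ odd n /\ cM (F 1) d).
  move=> d k hk; case: (FM_all k) => [h | [h1 h2]].
    by left; apply: cMt hk.
  by right; split => //; apply: cMt hk.
case=> ->.
- exact: (tr _ i).
- apply: (tr _ n); rewrite cM_sym.
  apply: cMt B1Fn; rewrite cM_sym.
  case: (posnP i) => i0.
    by rewrite i0 (@Bc 0 N); [apply: BM; lia | rewrite mod0n modnn].
  by apply: BM; lia.
- case: (eqVneq i n) => [-> | ine].
    apply: (tr _ n); rewrite cM_sym; apply: cMt B1Fn; rewrite cM_sym.
    apply: (cMt (y := B (n + n))); last by rewrite cM_sym; apply: cM1; rewrite fsR; cong.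
    by apply: BM; lia.
  apply: (tr _ (i + n)); rewrite cM_sym; apply: cM1; rewrite fsR; cong.
Qed.

Lemma nfacesM : nfaces (mobius_adj n) rM <= (if odd n then 1 else 2).
Proof.
apply: (@leq_trans (size (if odd n then [:: F 0] else [:: F 0; F 1])));
  last by case: (odd n).
apply: nfaces_le => p /allM [h | [on h]].
  by exists (F 0) => //; case: (odd n); rewrite !inE eqxx.
by exists (F 1) => //; rewrite (negbTE on) !inE eqxx orbT.
Qed.

Local Notation D := (del_vertex v).
Local Notation eD := (del_rel (mobius_adj n) v).

Lemma Y1v : Y 1 != v. Proof. by rewrite Yv; cong. Qed.
Definition w0 : D := exist _ (Y 1) Y1v.
Definition W i : D := insubd w0 (Y i).

Lemma valW i : ~~ (i == 0 %[mod N]) -> val (W i) = Y i.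
Proof. by move=> h; rewrite val_insubd Yv (negbTE h). Qed.

Definition nbD (x : D) : seq D := pmap insub (nbM (val x)).

Lemma nbD_E x y : eD x y = (y \in nbD x).
Proof. by rewrite /del_rel nbM_E /nbD mem_pmap_sub. Qed.

Lemma nbD_U x : uniq (nbD x).
Proof. exact/pmap_sub_uniq/nbM_U. Qed.

Lemma eD_sym : symmetric eD.
Proof. by move=> x y; rewrite /del_rel adj_sym. Qed.

Definition rD := rotp nbD_E nbD_U.
Local Notation fsD := (face_step rD).
Local Notation cD := (fconnect fsD).

Lemma val_nextD (x y : D) :
  val (next (nbD y) x) = next (filter (predC1 v) (nbM (val y))) (val x).
Proof.
rewrite -(next_map val_inj (nbD_U y)) /nbD (pmap_filter (@insubK _ _ _)).
by congr next; apply: eq_filter => z; rewrite isSome_insub.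
Qed.

Lemma fsD_W a b c : ~~ (a == 0 %[mod N]) -> ~~ (b == 0 %[mod N]) ->
  ~~ (c == 0 %[mod N]) -> mobius_adj n (Y b) (Y a) ->
  next (filter (predC1 v) (nbM (Y b))) (Y a) = Y c ->
  fsD (W a, W b) = (W b, W c).
Proof.
move=> ha hb hc hab hn'.
rewrite face_rotE; last by rewrite /del_rel !valW.
by congr pair; apply: val_inj; rewrite val_nextD !valW.
Qed.

Definition DF i := (W i, W (i + 1)).
Definition DB i := (W i, W (i + (N - 1))).
Definition DR i := (W i, W (i + n)).

Ltac fsd := apply: fsD_W; try (by cong); try (by rewrite adjY; cong);
  rewrite nbM_Y; cong; rewrite /= !Yv; cong; rewrite /= ?next3 ?next2 !Yeq; cong.

Lemma DfsF i : 0 < i -> i < N - 1 ->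
  fsD (DF i) = if i == n - 1 then DF (i + 1) else DR (i + 1).
Proof.
move=> h1 h2; case: eqP => e2; case: (eqVneq i (N - 2)) => e1; try (exfalso; lia); fsd.
Qed.

Lemma DfsR i : 0 < i -> i < N -> i != n ->
  fsD (DR i) = if i == n - 1 then DB (i + n) else DF (i + n).
Proof.
move=> h1 h2 h3; case: eqP => e2; case: (eqVneq i (n + 1)) => e1; try (exfalso; lia); fsd.
Qed.

Lemma DfsB i : 1 < i -> i < N ->
  fsD (DB i) = if i == 2 then DR (i + (N - 1)) else DB (i + (N - 1)).
Proof.
move=> h1 h2; case: eqP => e2; case: (eqVneq i (n + 1)) => e1; try (exfalso; lia); fsd.
Qed.

Lemma Wc i j : i = j %[mod N] -> W i = W j.
Proof. by move=> h; rewrite /W (Ycong h). Qed.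
Lemma DFc i j : i = j %[mod N] -> DF i = DF j.
Proof. by move=> h; rewrite /DF (Wc h) (Wc (cong1D 1 h)). Qed.
Lemma DBc i j : i = j %[mod N] -> DB i = DB j.
Proof. by move=> h; rewrite /DB (Wc h) (Wc (cong1D _ h)). Qed.
Lemma DRc i j : i = j %[mod N] -> DR i = DR j.
Proof. by move=> h; rewrite /DR (Wc h) (Wc (cong1D _ h)). Qed.

Lemma cD_sym x y : cD x y = cD y x.
Proof. exact: (fconnect_sym (@face_step_inj _ rD)). Qed.
Lemma cD1 d d' : fsD d = d' -> cD d d'.
Proof. by move=> <-; exact: fconnect1. Qed.
Lemma cDt x y z : cD x y -> cD y z -> cD x z.
Proof. exact: connect_trans. Qed.

Lemma dFR i : 0 < i -> i < N - 1 -> i != n - 1 -> cD (DF i) (DR (i + 1)).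
Proof. by move=> *; apply: cD1; rewrite DfsF //; case: eqP => //; lia. Qed.
Lemma dRF i : 0 < i -> i < N -> i != n -> i != n - 1 -> cD (DR i) (DF (i + n)).
Proof. by move=> *; apply: cD1; rewrite DfsR //; case: eqP => //; lia. Qed.

Lemma two_stepD i : (0 < i < n - 2) || (n - 1 < i < N - 3) -> cD (DF i) (DF (i + 2)).
Proof.
case/orP => /andP [h1 h2].
- apply: (cDt (dFR _ _ _)); try lia.
  apply: (cDt (dRF _ _ _ _)); try lia.
  apply: (cDt (dFR _ _ _)); try lia.
  apply: (cDt (dRF _ _ _ _)); try lia.
  by rewrite (@DFc _ (i + 2)) //; apply/eqP; cong.
- apply: (cDt (dFR _ _ _)); try lia.
  apply: (cDt (dRF _ _ _ _)); try lia.
  rewrite (@DFc (i + 1 + n) (i + 1 - n)); last by apply/eqP; cong.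
  apply: (cDt (dFR _ _ _)); try lia.
  apply: (cDt (dRF _ _ _ _)); try lia.
  by rewrite (_ : i + 1 - n + 1 + n = i + 2) //; lia.
Qed.

Lemma chainD a b : a <= b -> 2 %| b - a ->
  (forall j, a <= j -> j + 2 <= b -> (0 < j < n - 2) || (n - 1 < j < N - 3)) ->
  cD (DF a) (DF b).
Proof.
move=> ab d h; apply: (chain (f := DF) (s := 2)) => // j h1 h2.
exact/two_stepD/h.
Qed.

Ltac chd := apply: chainD; [lia | rewrite dvdn2; lia | move=> ? ? ?; lia].

Lemma BD k : 2 <= k < N -> cD (DB 2) (DB k).
Proof.
case/andP=> k1 k2; apply: (chain (f := DB) (s := 1)); [done | | lia | exact: dvd1n].
move=> j h1 h2; rewrite cD_sym; apply: cD1; rewrite DfsB; try lia.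
by case: eqP => [|_]; [lia | apply: DBc; apply/eqP; cong].
Qed.

Lemma B2R1 : cD (DB 2) (DR 1).
Proof. by apply: cD1; rewrite DfsB //; try lia; apply: DRc; apply/eqP; cong. Qed.

Lemma Fn1Fn : cD (DF (n - 1)) (DF n).
Proof.
apply: cD1; rewrite DfsF; try lia; rewrite eqxx.
by apply: DFc; apply/eqP; cong.
Qed.

Lemma Fn2B : 2 < n -> cD (DF (n - 2)) (DB 2).
Proof.
move=> n3; apply: (cDt (y := DR (n - 2 + 1))).
  by apply: cD1; rewrite DfsF; try lia; case: eqP => //; lia.
rewrite cD_sym; apply: (cDt (BD (k := N - 1) _)); first lia.
rewrite cD_sym; apply: cD1; rewrite DfsR; try lia; case: eqP => hh; try lia.
by apply: DBc; apply/eqP; cong.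
Qed.

Lemma Fn1B : 2 < n -> cD (DF (n + 1)) (DB 2).
Proof.
move=> n3; rewrite cD_sym; apply: (cDt B2R1).
apply: cD1; rewrite DfsR; try lia; case: eqP => hh; try lia.
by apply: DFc; apply/eqP; cong.
Qed.

Lemma FN2 : cD (DF (N - 2)) (DF (n - 1)).
Proof.
apply: (cDt (dFR _ _ _)); try lia.
apply: (cDt (dRF _ _ _ _)); try lia.
by rewrite (@DFc _ (n - 1)) //; apply/eqP; cong.
Qed.

Lemma FD i : 0 < i < N - 1 ->
  cD (DB 2) (DF i) \/ (~~ odd n /\ cD (DF (n - 1)) (DF i)).
Proof.
case/andP=> i1 i2.
case: (boolP (odd n)) => on.
  have n3 : 2 < n by lia.
  have hE : cD (DB 2) (DF (n - 1)).
    rewrite cD_sym; apply: (cDt (y := DF (N - 2))); first by rewrite cD_sym; exact: FN2.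
    rewrite cD_sym; apply: (cDt (y := DF (n + 1))); [rewrite cD_sym; exact: (Fn1B n3) | chd].
  left; case: (boolP (odd i)) => oi; case: (leqP n i) => ni.
  - apply: (cDt hE); apply: (cDt Fn1Fn); chd.
  - rewrite cD_sym; apply: (cDt (y := DF (n - 2))); [chd | exact: Fn2B].
  - rewrite cD_sym; apply: (cDt (y := DF (n + 1))); [rewrite cD_sym; chd | exact: Fn1B].
  - apply: (cDt hE); rewrite cD_sym; chd.
case: (boolP (odd i)) => oi; case: (leqP n i) => ni.
- left; rewrite cD_sym; apply: (cDt (y := DF (n + 1))); [rewrite cD_sym; chd | apply: Fn1B; lia].
- by right; split => //; rewrite cD_sym; chd.
- by right; split => //; apply: (cDt Fn1Fn); chd.
- left; rewrite cD_sym; apply: (cDt (y := DF (n - 2))); [chd | apply: Fn2B; lia].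
Qed.

Lemma dart_D (p : D * D) : eD p.1 p.2 -> exists2 a, 0 < a < N &
  [\/ p = DF a /\ a < N - 1, p = DB a /\ 1 < a | p = DR a /\ a != n].
Proof.
case: p => x y /=.
have [a [ha ha0 ->]] : exists a, [/\ a < N, ~~ (a == 0 %[mod N]) & x = W a].
  exists (rl (val x)); split; first exact: rel_lt.
    by have := valP x; rewrite -{1}(YK (val x)) Yv.
  by apply: val_inj; rewrite valW ?YK // -Yv YK (valP x).
have [b [hb hb0 ->]] : exists b, [/\ b < N, ~~ (b == 0 %[mod N]) & y = W b].
  exists (rl (val y)); split; first exact: rel_lt.
    by have := valP y; rewrite -{1}(YK (val y)) Yv.
  by apply: val_inj; rewrite valW ?YK // -Yv YK (valP y).
rewrite /del_rel !valW // nbM_E mem_nbM => h.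
have a0 : 0 < a by case: (posnP a) ha0 => // ->; cong.
exists a; first lia'.
case/or3P: h => /eqP h; rewrite h in hb0; rewrite (Wc h).
- apply: Or31; split => //.
  have : a != N - 1 by apply: contra hb0 => /eqP ->; cong.
  lia'.
- apply: Or32; split => //.
  have : a != 1 by apply: contra hb0 => /eqP ->; cong.
  lia'.
- apply: Or33; split => //.
  by apply: contra hb0 => /eqP ->; cong.
Qed.

Lemma allD p : eD p.1 p.2 -> cD (DB 2) p \/ (~~ odd n /\ cD (DF (n - 1)) p).
Proof.
move=> /dart_D [a /andP [a0 aN]].
have tr : forall d k, 0 < k < N - 1 -> cD (DF k) d ->
    cD (DB 2) d \/ (~~ odd n /\ cD (DF (n - 1)) d).
  move=> d k hk hd; case: (FD hk) => [h | [h1 h2]].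
    by left; apply: cDt hd.
  by right; split => //; apply: cDt hd.
case=> [[-> h] | [-> h] | [-> h]].
- by apply: (tr _ a); [lia' | exact: connect0].
- by left; apply: BD; lia'.
- case: (eqVneq a (n - 1)) => e.
    left; apply: (cDt (y := DB (N - 1))); first by apply: BD; lia'.
    rewrite cD_sym; apply: cD1; rewrite DfsR //; rewrite e eqxx.
    by apply: DBc; apply/eqP; cong.
  case: (ltnP (a + n) N) => han.
    by apply: (tr _ (a + n)); [lia' | rewrite cD_sym; apply: dRF].
  apply: (tr _ (a - n)); first lia'.
  rewrite cD_sym (@DFc (a - n) (a + n)); first exact: dRF.
  by apply/eqP; cong.
Qed.

Lemma nfacesD : nfaces eD rD <= (if odd n then 1 else 2).
Proof.
apply: (@leq_trans (size (if odd n then [:: DB 2] else [:: DB 2; DF (n - 1)])));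
  last by case: (odd n).
apply: nfaces_le => p /allD [h | [on h]].
  by exists (DB 2) => //; case: (odd n); rewrite !inE eqxx.
by exists (DF (n - 1)) => //; rewrite (negbTE on) !inE eqxx orbT.
Qed.

Lemma sum_sigD (f : 'I_N -> nat) : \sum_(x : D) f (val x) = \sum_(y | y != v) f y.
Proof.
rewrite (reindex_omap (val : D -> 'I_N) insub); last by move=> i hi; rewrite insubT.
by apply: eq_bigl => -[i iA] /=; rewrite insubT ?iA /= eqxx.
Qed.

Lemma size_nbM y : size (nbM y) = 3.
Proof. by rewrite /nbM; case: ifP. Qed.

Lemma nedgesM : nedges (mobius_adj n) = 3 * n.
Proof.
rewrite /nedges (dart_card nbM_E nbM_U) (eq_bigr (fun _ => 3)); last by move=> *; exact: size_nbM.
rewrite sum_nat_const card_ord; lia.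
Qed.

Lemma v_notin : (v \in nbM v) = false.
Proof. by rewrite -Y0 mem_nbM; cong. Qed.

Lemma nedgesD : nedges eD = 3 * n - 3.
Proof.
rewrite /nedges (dart_card nbD_E nbD_U).
have -> : \sum_x size (nbD x) = \sum_(x : D) count (predC1 v) (nbM (val x)).
  by apply: eq_bigr => x _; rewrite /nbD size_pmap_sub.
rewrite (sum_sigD (fun y => count (predC1 v) (nbM y))).
have hs : \sum_y (count (predC1 v) (nbM y) + (v \in nbM y)) = 3 * N.
  rewrite (eq_bigr (fun _ => 3)); first by rewrite sum_nat_const card_ord mulnC.
  move=> y _; rewrite -(count_uniq_mem _ (nbM_U y)) addnC.
  by rewrite -[X in _ = X](size_nbM y) -(count_predC (pred1 v)).
have hc : \sum_y ((v \in nbM y) : nat) = 3.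
  transitivity (#|[pred y | v \in nbM y]|).
    by rewrite -sum1_card [RHS]big_mkcond; apply: eq_bigr => y _; rewrite inE; case: (_ \in _).
  rewrite (eq_card (B := [pred y in nbM v])); last first.
    by move=> y; rewrite !inE -!nbM_E adj_sym.
  by rewrite (card_uniqP (nbM_U v)) size_nbM.
have fv : count (predC1 v) (nbM v) = 3.
  have := count_predC (pred1 v) (nbM v).
  by rewrite (count_uniq_mem _ (nbM_U v)) v_notin size_nbM.
rewrite big_split /= hc (bigD1 v) //= fv in hs.
move: hs; move: (\sum_(i | i != v) _) => X hs; lia.
Qed.

Lemma W_all (x : D) : exists2 a, 0 < a < N & x = W a.
Proof.
have h0 : ~~ (rl (val x) == 0 %[mod N]).
  by have := valP x; rewrite -{1}(YK (val x)) Yv.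
have a0 : 0 < rl (val x) by case: (posnP (rl (val x))) h0 => // ->; cong.
exists (rl (val x)); first by rewrite a0 rel_lt.
by apply: val_inj; rewrite valW ?YK.
Qed.

Lemma connD : connected_graph eD.
Proof.
have symc : connect_sym eD := sym_connect_sym eD_sym.
have base : forall k, 1 <= k <= N - 1 -> connect eD (W 1) (W k).
  move=> k /andP [k1 k2]; apply: (chain (f := W) (s := 1)); [done | | lia | exact: dvd1n].
  move=> j h1 h2; apply: connect1; rewrite /del_rel !valW; try cong.
  by rewrite adjY; cong.
move=> x y; have [a ha ->] := W_all x; have [b hb ->] := W_all y.
apply: (connect_trans (y := W 1)); [rewrite symc | ]; apply: base; lia'.
Qed.

Lemma cardD : #|{: D}| = N - 1.
Proof. by rewrite card_sig cardC1 card_ord; lia. Qed.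

Lemma maxM : max_genus (mobius_adj n) = (n + 1)./2.
Proof.
apply: (@max_genus_eq _ _ adj_sym _ rM (F 0)).
- by rewrite /is_dart /= adjY; cong.
- exact: rot_sys.
- by rewrite nedgesM card_ord; lia.
- apply: leq_trans (genus_ge nfacesM); rewrite nedgesM card_ord.
  by case: (boolP (odd n)) => on; lia.
Qed.

Lemma maxD : max_genus eD = (n - 1)./2.
Proof.
apply: (@max_genus_eq _ _ eD_sym _ rD (DF 1)).
- by rewrite /is_dart /= /del_rel !valW; try cong; rewrite adjY; cong.
- exact: rot_sys.
- by rewrite nedgesD cardD; lia.
- apply: leq_trans (genus_ge nfacesD); rewrite nedgesD cardD.
  by case: (boolP (odd n)) => on; lia.
Qed.

End Mob.

Theorem theorem2p1 (n : nat) (hn : 2 <= n) (v : 'I_(n.*2)) :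
  connected_graph (del_rel (mobius_adj n) v) /\
  max_genus (del_rel (mobius_adj n) v) + 1 = max_genus (mobius_adj n).
Proof.
split; first exact: connD.
rewrite (maxD hn v) (maxM hn v); lia.
Qed.
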